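(* Let $(\pi,T,\eta,\mu)$ be a symmetric random system (in particular $T$-invariant and time reversible). Then the Markov operator $P_{\eta,T}$ is self-adjoint on $L^2(X,\mu)$. In particular $P_{\eta,T^{-1}}=P_{\eta,T}$.
   Context: A measured fibration is a measurable map $\pi:\mathcal M\to X$ between Borel spaces together with a family $\eta=\{\eta_x\}_{x\in X}$ of probability measures on $\mathcal M$ with $\eta_x(\pi^{-1}(x))=1$ for every $x$, measurable in the sense that $x\mapsto\eta_x(f)=\int f\,d\eta_x$ is Borel for every Borel $f:\mathcal M\to[0,\infty]$. A random system $(\pi,T,\eta,\mu)$ consists of such a measured fibration, a measurable map $T:\mathcal M\to\mathcal M$, and a probability measure $\mu$ on $X$; $\mu\circ\eta$ is the probability measure on $\mathcal M$ with $(\mu\circ\eta)(f)=\int_X\eta_x(f)\,d\mu(x)$. The Markov operator is $(P_{\eta,T}f)(x)=\int_{\pi^{-1}(x)}f(\pi(T(\xi)))\,d\eta_x(\xi)$. The random system is $T$-invariant if $T$ is a measurable isomorphism and $\nu:=\mu\circ\eta$ satisfies $T_*\nu=\nu$. It is time reversible if there is a measurable isomorphism $\tilde J:\mathcal M\to\mathcal M$ mapping fibers of $\pi$ to fibers, with $\tilde J_*\nu=\nu$ and $T\circ\tilde J=\tilde J\circ T^{-1}$; $\tilde J$ induces $J:X\to X$ with $J\circ\pi=\pi\circ\tilde J$. An automorphism (symmetry) of the random system is a measurable isomorphism $\tilde S:\mathcal M\to\mathcal M$ with $T\circ\tilde S=\tilde S\circ T$, mapping fibers to fibers and with $\tilde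 S_*\nu=\nu$; it induces $S:X\to X$ with $S\circ\pi=\pi\circ\tilde S$. A $T$-invariant, time reversible random system with time-reversing map $\tilde J$ is called symmetric if there exists an automorphism $\tilde S$ whose induced map $S$ on $X$ coincides with the map $J$ induced by $\tilde J$. *)

(* Defs.v *)
From HB Require Import structures.
From mathcomp Require Import all_boot all_order all_algebra.
From mathcomp Require Import all_classical all_reals all_analysis.
From mathcomp Require Import measurable_realfun.
Set Implicit Arguments. Unset Strict Implicit. Unset Printing Implicit Defensive.
Import Order.TTheory GRing.Theory Num.Theory.
Local Open Scope classical_set_scope.
Local Open Scope ring_scope.

Section RandomSystems.
Context {R : realType} {dX dM : measure_display}
  {X : measurableType dX} {M : measurableType dM}.

Definition measurable_iso (F Finv : M -> M) :=
  [/\ measurable_fun setT F, measurable_fun setT Finv,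
      cancel F Finv & cancel Finv F].

Definition measured_fibration (pi : M -> X) (eta : X -> probability M R) :=
  [/\ measurable_fun setT pi,
      (forall x : X, eta x (pi @^-1` [set x]) = 1%E) &
      (forall f : M -> \bar R, measurable_fun setT f -> (forall xi, (0 <= f xi)%E) ->
         measurable_fun setT (fun x => (\int[eta x]_xi f xi)%E))].

Definition compose_measure (mu : probability X R) (eta : X -> probability M R)
  (A : set M) : \bar R := \int[mu]_x eta x A.

Definition preserves (mu : probability X R) (eta : X -> probability M R)
  (F : M -> M) :=
  forall A : set M, measurable A ->
    compose_measure mu eta (F @^-1` A) = compose_measure mu eta A.

Definition fiber_preserving (pi : M -> X) (F : M -> M) :=
  forall xi xi', pi xi = pi xi' -> pi (F xi) = pi (F xi').

Definition induced_map (pi : M -> X) (F : M -> M) (f : X -> X) :=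
  forall xi, f (pi xi) = pi (F xi).

Definition markov_op (pi : M -> X) (eta : X -> probability M R) (T : M -> M)
  (f : X -> R) (x : X) : R :=
  Rintegral (eta x) (pi @^-1` [set x]) (fun xi => f (pi (T xi))).

Definition sq_integrable (mu : probability X R) (f : X -> R) :=
  measurable_fun setT f /\ mu.-integrable setT (fun x => (f x ^+ 2)%:E).

End RandomSystems.

(* Main.v *)
Require Import Defs.
From HB Require Import structures.
From mathcomp Require Import all_boot all_order all_algebra.
From mathcomp Require Import all_classical all_reals all_analysis.
From mathcomp Require Import measurable_realfun.
From mathcomp Require Import ring lra.
Import Order.TTheory GRing.Theory Num.Theory.
Local Open Scope classical_set_scope.
Local Open Scope ring_scope.

Section Gen.
Context (R : realType) (d : measure_display) (T : measurableType d).
Lemma normr_le_sq1 (x : R) : (`|x| <= x ^+ 2 + 1)%R.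
Proof.
have : (`|x| ^+ 2 = x ^+ 2)%R by rewrite real_normK ?num_real.
move=> <-; have := normr_ge0 x; set a := `|x|; nra.
Qed.

Local Open Scope ereal_scope.



Lemma L2_prod (m : {measure set T -> \bar R}) (a b : T -> R) :
  measurable_fun setT a -> measurable_fun setT b ->
  m.-integrable setT (fun x => (a x ^+ 2)%:E) ->
  m.-integrable setT (fun x => (b x ^+ 2)%:E) ->
  m.-integrable setT (fun x => (a x * b x)%:E).
Proof.
move=> ma mb ia ib.
apply: (@le_integrable _ _ _ _ _ measurableT _ (fun x => (a x ^+ 2)%:E + (b x ^+ 2)%:E)%E) => //.
- by apply/measurable_EFinP; exact: measurable_funM.
- move=> x _ /=; rewrite lee_fin normrM.
  rewrite [X in (_ <= X)%R]ger0_norm ?addr_ge0 ?sqr_ge0//.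
  have h1 : (`|a x| ^+ 2 = a x ^+ 2)%R by rewrite real_normK ?num_real.
  have h2 : (`|b x| ^+ 2 = b x ^+ 2)%R by rewrite real_normK ?num_real.
  rewrite -h1 -h2; have := normr_ge0 (a x); have := normr_ge0 (b x).
  set p := (`|a x|)%R; set q := (`|b x|)%R; nra.
- exact: (integrableD measurableT ia ib).
Qed.



Lemma L2_B (m : {measure set T -> \bar R}) (a b : T -> R) :
  measurable_fun setT a -> measurable_fun setT b ->
  m.-integrable setT (fun x => (a x ^+ 2)%:E) ->
  m.-integrable setT (fun x => (b x ^+ 2)%:E) ->
  m.-integrable setT (fun x => ((a x - b x) ^+ 2)%:E).
Proof.
move=> ma mb ia ib.
have i2a : m.-integrable setT (fun x => (2%:R)%:E * (a x ^+ 2)%:E) by exact: integrableZl.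
have i2b : m.-integrable setT (fun x => (2%:R)%:E * (b x ^+ 2)%:E) by exact: integrableZl.
apply: (@le_integrable _ _ _ _ _ measurableT _ (fun x => (2%:R)%:E * (a x ^+ 2)%:E + (2%:R)%:E * (b x ^+ 2)%:E)%E) => //.
- apply/measurable_EFinP; apply: measurable_funX; exact: measurable_funB.
- move=> x _ /=; rewrite lee_fin.
  rewrite ger0_norm ?sqr_ge0// ger0_norm; last by rewrite addr_ge0// mulr_ge0// sqr_ge0.
  set p := a x; set q := b x; have := sqr_ge0 (p + q)%R; rewrite sqrrD sqrrB; lra.
- exact: (integrableD measurableT i2a i2b).
Qed.

Context (P : probability T R).

Lemma L2_L1 (h : T -> R) : measurable_fun setT h ->
  P.-integrable setT (fun x => (h x ^+ 2)%:E) -> P.-integrable setT (fun x => (h x)%:E).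
Proof.
move=> mh ih.
apply: (@le_integrable _ _ _ _ _ measurableT _ (fun x => (h x ^+ 2)%:E + (EFin \o cst 1%R) x)%E) => //.
- exact/measurable_EFinP.
- move=> x _ /=; rewrite lee_fin.
  rewrite [X in (_ <= X)%R]ger0_norm ?addr_ge0 ?sqr_ge0//; exact: normr_le_sq1.
- exact: (integrableD measurableT ih (finite_measure_integrable_cst _ _ measurableT)).
Qed.

Lemma sq_le (h : T -> R) : measurable_fun setT h ->
  ((fine (\int[P]_x (h x)%:E)) ^+ 2)%:E <= \int[P]_x (h x ^+ 2)%:E.
Proof.
move=> mh.
have [->|hfin] := eqVneq (\int[P]_x (h x ^+ 2)%:E) +oo; first exact: leey.
have ih2 : P.-integrable setT (fun x => (h x ^+ 2)%:E).
  apply/integrableP; split; first by apply/measurable_EFinP; exact: measurable_funX.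
  under eq_integral do rewrite abse_EFin ger0_norm ?sqr_ge0//.
  by rewrite ltey.
have ih : P.-integrable setT (fun x => (h x)%:E) by exact: L2_L1.
set c := fine _.
have ce : \int[P]_x (h x)%:E = c%:E by rewrite fineK// integrable_fin_num.
have ig : P.-integrable setT (fun x => ((2 * c) * h x - c ^+ 2)%:E).
  under eq_fun do rewrite EFinB EFinM.
  apply: integrableB => //; first exact: integrableZl.
  exact: finite_measure_integrable_cst.
have H : \int[P]_x ((2 * c) * h x - c ^+ 2)%:E <= \int[P]_x (h x ^+ 2)%:E.
  apply: (le_integral measurableT ig ih2) => x _; rewrite lee_fin.
  set p := h x; have := sqr_ge0 (p - c)%R; rewrite sqrrB; lra.
apply: le_trans H.
under eq_integral do rewrite EFinB EFinM.
rewrite integralB //; first last.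
- exact: finite_measure_integrable_cst.
- exact: integrableZl.
have P1 : (P : {measure set T -> \bar R}) setT = 1 by exact: probability_setT.
rewrite integralZl// ce integral_cst// P1 mule1 -EFinM -EFinB lee_fin.
lra.
Qed.

End Gen.

Section Main.
Context (R : realType) (dX dM : measure_display)
  (X : measurableType dX) (M : measurableType dM)
  (hX : forall x : X, measurable [set x])
  (pi : M -> X) (eta : X -> probability M R) (mu : probability X R)
  (hfib : measured_fibration pi eta).

Local Open Scope ereal_scope.

Lemma mpi : measurable_fun setT pi. Proof. by case: hfib. Qed.

Lemma meta_set {A : set M} : measurable A -> measurable_fun setT (fun x => eta x A).
Proof.
move=> mA; case: hfib => _ _ h.
apply: (eq_measurable_fun (fun x => \int[eta x]_xi (\1_A xi)%:E)).
  by move=> x _; rewrite integral_indic// setIT.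
apply: h.
  by apply/measurable_EFinP; exact: measurable_indic.
by move=> xi; rewrite lee_fin.
Qed.

Definition etak (p : unit * X) : {measure set M -> \bar R} := eta p.2.

Lemma metak U : measurable U -> measurable_fun [set: unit * X] (etak ^~ U).
Proof.
move=> mU; exact: (measurableT_comp (meta_set mU) measurable_snd).
Qed.

HB.instance Definition _ := isKernel.Build _ _ _ _ R etak metak.

Lemma etak1 p : etak p [set: M] = 1.
Proof. exact: probability_setT. Qed.

HB.instance Definition _ := Kernel_isProbability.Build _ _ _ _ R etak etak1.

Definition muk := kprobability (measurable_cst (mu : pprobability X R) : measurable_fun [set: unit] _).

Definition nu : {measure set M -> \bar R} := (muk \; etak) tt.

Lemma nuE (A : set M) : nu A = compose_measure mu eta A.
Proof. by []. Qed.

Lemma nu_int (h : M -> \bar R) : (forall z, 0 <= h z) -> measurable_fun setT h ->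
  \int[nu]_z h z = \int[mu]_x \int[eta x]_z h z.
Proof. move=> h0 mh. have := (@integral_kcomp _ _ _ _ _ _ R muk etak tt h h0 mh). exact. Qed.


Definition fib x := pi @^-1` [set x].

Lemma mfib x : measurable (fib x).
Proof. by rewrite /fib -[X in measurable X]setTI; apply: mpi => //; exact: hX. Qed.

Lemma fibC x : eta x (~` fib x) = 0.
Proof.
rewrite probability_setC; last exact: mfib.
by case: hfib => _ -> _; rewrite subee.
Qed.

Lemma etafib x : (eta x : {measure set M -> \bar R}) (fib x) = 1.
Proof. by case: hfib => _ e _; exact: e. Qed.

Lemma int_fib_ge0 x (h : M -> \bar R) : (forall z, 0 <= h z) ->
  measurable_fun setT h -> \int[eta x]_(z in fib x) h z = \int[eta x]_z h z.
Proof.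
move=> h0 mh.
rewrite (@ge0_negligible_integral _ _ _ (eta x) setT (~` fib x))//.
- by rewrite setTD setCK.
- exact/measurableC/mfib.
- exact: fibC.
Qed.

Lemma int_fib x (h : M -> \bar R) : measurable_fun setT h ->
  \int[eta x]_(z in fib x) h z = \int[eta x]_z h z.
Proof.
move=> mh; rewrite integralE [RHS]integralE.
rewrite !int_fib_ge0//.
- exact: measurable_funeneg.
- exact: measurable_funepos.
Qed.

Lemma int_pi x (u : X -> \bar R) : measurable_fun setT u ->
  \int[eta x]_z u (pi z) = u x.
Proof.
move=> mu'; rewrite -int_fib; last exact: measurableT_comp mu' mpi.
rewrite (eq_integral (fun=> u x)); last by move=> z; rewrite inE /fib /= => ->.
rewrite integral_cst; last exact: mfib.
by rewrite etafib mule1.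
Qed.

Lemma nu_pi_ge0 (u : X -> \bar R) : (forall x, 0 <= u x) -> measurable_fun setT u ->
  \int[nu]_z u (pi z) = \int[mu]_x u x.
Proof.
move=> u0 mu'; rewrite nu_int//; last exact: measurableT_comp mu' mpi.
by apply: eq_integral => x _; rewrite int_pi.
Qed.

Lemma nu_pi (u : X -> \bar R) : measurable_fun setT u ->
  \int[nu]_z u (pi z) = \int[mu]_x u x.
Proof.
move=> mu'; rewrite integralE [RHS]integralE.
rewrite -(nu_pi_ge0 (u^\+) (fun x => funepos_ge0 u x) (measurable_funepos mu')).
rewrite -(nu_pi_ge0 (u^\-) (fun x => funeneg_ge0 u x) (measurable_funeneg mu')).
by congr (_ - _); apply: eq_integral => z _; by rewrite !(funeposE, funenegE).
Qed.

Definition pres (F : M -> M) := measurable_fun setT F /\ preserves mu eta F.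

Lemma inv_ge0 F (h : M -> \bar R) : pres F -> (forall z, 0 <= h z) ->
  measurable_fun setT h -> \int[nu]_z h (F z) = \int[nu]_z h z.
Proof.
move=> [mF pF] h0 mh.
have := @ge0_integral_pushforward _ _ _ _ R F mF nu setT h measurableT mh (fun z _ => h0 z).
rewrite preimage_setT => <-.
apply: eq_measure_integral => A mA _.
transitivity (compose_measure mu eta (F @^-1` A)); first by [].
by rewrite pF.
Qed.

Lemma inv F (h : M -> \bar R) : pres F ->
  measurable_fun setT h -> \int[nu]_z h (F z) = \int[nu]_z h z.
Proof.
move=> pF mh; rewrite integralE [RHS]integralE.
rewrite -(@inv_ge0 F (h^\+) pF (fun x => funepos_ge0 h x) (measurable_funepos mh)).
rewrite -(@inv_ge0 F (h^\-) pF (fun x => funeneg_ge0 h x) (measurable_funeneg mh)).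
by congr (_ - _); apply: eq_integral => z _; by rewrite !(funeposE, funenegE).
Qed.


Lemma meta_int (h : M -> \bar R) : (forall z, 0 <= h z) -> measurable_fun setT h ->
  measurable_fun setT (fun x => \int[eta x]_z h z).
Proof. by case: hfib => _ _ H h0 mh; exact: H. Qed.

Lemma P_E F u x : measurable_fun setT F -> measurable_fun setT u ->
  markov_op pi eta F u x = fine (\int[eta x]_z (u (pi (F z)))%:E).
Proof.
move=> mF mu'; rewrite /markov_op /Rintegral int_fib//.
apply/measurable_EFinP; apply: measurableT_comp mu' _; exact: measurableT_comp mpi mF.
Qed.

Lemma mP F u : measurable_fun setT F -> measurable_fun setT u ->
  measurable_fun setT (markov_op pi eta F u).
Proof.
move=> mF mu'.
have mH : measurable_fun setT (fun z => (u (pi (F z)))%:E).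
  apply/measurable_EFinP; apply: measurableT_comp mu' _; exact: measurableT_comp mpi mF.
apply: (eq_measurable_fun (fun x => fine (\int[eta x]_z (u (pi (F z)))%:E))).
  by move=> x _; rewrite P_E.
apply: measurableT_comp; first exact: fine_measurable.
apply: (eq_measurable_fun (fun x => \int[eta x]_z (fun z => (u (pi (F z)))%:E)^\+ z -
   \int[eta x]_z (fun z => (u (pi (F z)))%:E)^\- z)).
  by move=> x _; rewrite [RHS]integralE.
apply: emeasurable_funB; apply: meta_int.
- exact: funepos_ge0.
- exact: measurable_funepos.
- exact: funeneg_ge0.
- exact: measurable_funeneg.
Qed.

Lemma L2 F u : pres F -> sq_integrable mu u -> sq_integrable mu (markov_op pi eta F u).
Proof.
move=> pF [mu' iu]; have mF := pF.1.
have mH2 : measurable_fun setT (fun z => ((u (pi (F z))) ^+ 2)%:E).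
  apply/measurable_EFinP; apply: measurable_funX.
  apply: measurableT_comp mu' _; exact: measurableT_comp mpi mF.
split; first exact: mP.
apply/integrableP; split.
  by apply/measurable_EFinP; apply: measurable_funX; exact: mP.
under eq_integral do rewrite abse_EFin ger0_norm ?sqr_ge0//.
apply: (@le_lt_trans _ _ (\int[mu]_x \int[eta x]_z ((u (pi (F z))) ^+ 2)%:E)).
  apply: ge0_le_integral => //.
  - by move=> x _; rewrite lee_fin sqr_ge0.
  - by apply/measurable_EFinP; apply: measurable_funX; exact: mP.
  - by apply: meta_int => // z; rewrite lee_fin sqr_ge0.
  move=> x _; rewrite P_E//.
  apply: (@sq_le _ _ _ (eta x) (fun z => u (pi (F z)))).
  apply: measurableT_comp mu' _; exact: measurableT_comp mpi mF.
rewrite -nu_int//; last by move=> z; rewrite lee_fin sqr_ge0.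
rewrite (@inv_ge0 F (fun z => ((u (pi z)) ^+ 2)%:E))//; first last.
- apply/measurable_EFinP; apply: measurable_funX; exact: measurableT_comp mu' mpi.
- by move=> z; rewrite lee_fin sqr_ge0.
rewrite (nu_pi_ge0 (fun x => ((u x) ^+ 2)%:E)); first last.
- by apply/measurable_EFinP; apply: measurable_funX.
- by move=> z; rewrite lee_fin sqr_ge0.
move/integrableP: iu => [_].
by under eq_integral do rewrite abse_EFin ger0_norm ?sqr_ge0//.
Qed.

Lemma meta_gen (h : M -> \bar R) : measurable_fun setT h ->
  measurable_fun setT (fun x => \int[eta x]_z h z).
Proof.
move=> mh.
apply: (eq_measurable_fun (fun x => \int[eta x]_z h^\+ z - \int[eta x]_z h^\- z)).
  by move=> x _; rewrite [RHS]integralE.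
apply: emeasurable_funB; apply: meta_int.
- exact: funepos_ge0.
- exact: measurable_funepos.
- exact: funeneg_ge0.
- exact: measurable_funeneg.
Qed.

Lemma pres_id : pres id.
Proof. by split => // A mA; rewrite preimage_id. Qed.

Lemma L2nu F u : pres F -> sq_integrable mu u ->
  nu.-integrable setT (fun z => (u (pi (F z)) ^+ 2)%:E).
Proof.
move=> pF [mu' iu]; have mF := pF.1.
apply/integrableP; split.
  apply/measurable_EFinP; apply: measurable_funX.
  apply: measurableT_comp mu' _; exact: measurableT_comp mpi mF.
under eq_integral do rewrite abse_EFin ger0_norm ?sqr_ge0//.
rewrite (@inv_ge0 F (fun z => ((u (pi z)) ^+ 2)%:E))//; first last.
- apply/measurable_EFinP; apply: measurable_funX; exact: measurableT_comp mu' mpi.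
- by move=> z; rewrite lee_fin sqr_ge0.
rewrite (nu_pi_ge0 (fun x => ((u x) ^+ 2)%:E)); first last.
- by apply/measurable_EFinP; apply: measurable_funX.
- by move=> z; rewrite lee_fin sqr_ge0.
move/integrableP: iu => [_].
by under eq_integral do rewrite abse_EFin ger0_norm ?sqr_ge0//.
Qed.

Lemma nu_int_int (h : M -> \bar R) : nu.-integrable setT h ->
  \int[nu]_z h z = \int[mu]_x \int[eta x]_z h z.
Proof.
move=> ih; have mh := measurable_int _ ih.
have iA : mu.-integrable setT (fun x => \int[eta x]_z h^\+ z).
  apply/integrableP; split; first exact: (meta_int _ (funepos_ge0 h) (measurable_funepos mh)).
  rewrite (eq_integral (fun x => \int[eta x]_z h^\+ z)); last first.
    by move=> x _; rewrite gee0_abs// integral_ge0// => z _; exact: funepos_ge0.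
  rewrite -(nu_int _ (funepos_ge0 h) (measurable_funepos mh)).
  by move/integrableP: (integrable_funepos measurableT ih) => [_]; under eq_integral do rewrite gee0_abs ?funepos_ge0//.
have iB : mu.-integrable setT (fun x => \int[eta x]_z h^\- z).
  apply/integrableP; split; first exact: (meta_int _ (funeneg_ge0 h) (measurable_funeneg mh)).
  rewrite (eq_integral (fun x => \int[eta x]_z h^\- z)); last first.
    by move=> x _; rewrite gee0_abs// integral_ge0// => z _; exact: funeneg_ge0.
  rewrite -(nu_int _ (funeneg_ge0 h) (measurable_funeneg mh)).
  by move/integrableP: (integrable_funeneg measurableT ih) => [_]; under eq_integral do rewrite gee0_abs ?funeneg_ge0//.
rewrite integralE (nu_int _ (funepos_ge0 h) (measurable_funepos mh)).
rewrite (nu_int _ (funeneg_ge0 h) (measurable_funeneg mh)).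
rewrite -(integralB measurableT iA iB).
by apply: eq_integral => x _; rewrite [RHS]integralE.
Qed.

Lemma Adj F u v : pres F -> sq_integrable mu u -> sq_integrable mu v ->
  \int[mu]_x (markov_op pi eta F u x * v x)%:E =
  \int[nu]_z (u (pi (F z)) * v (pi z))%:E.
Proof.
move=> pF su sv; have [mu' iu] := su; have [mv iv] := sv; have mF := pF.1.
have ma : measurable_fun setT (fun z => u (pi (F z))).
  exact: measurableT_comp mu' (measurableT_comp mpi mF).
have mb : measurable_fun setT (fun z => v (pi z)) by exact: measurableT_comp mv mpi.
have iH : nu.-integrable setT (fun z => (u (pi (F z)) * v (pi z))%:E).
  apply: L2_prod => //; first exact: L2nu.
  exact: (@L2nu id v pres_id sv).
rewrite (nu_int_int _ iH).
apply: ae_eq_integral => //.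
- apply/measurable_EFinP; apply: measurable_funM => //; exact: mP.
- exact: meta_gen (measurable_int _ iH).
have iu1 : mu.-integrable setT (fun x => (u x)%:E) by exact: L2_L1.
have mA1 : measurable_fun setT (fun z => `|(u (pi (F z)))%:E|).
  by apply: measurableT_comp => //; apply/measurable_EFinP.
have mA2 : measurable_fun setT (fun z => `|(u (pi z))%:E|).
  by apply: measurableT_comp => //; apply/measurable_EFinP; exact: measurableT_comp mu' mpi.
have mA3 : measurable_fun setT (fun x => `|(u x)%:E|).
  by apply: measurableT_comp => //; apply/measurable_EFinP.
have iphi : mu.-integrable setT (fun x => \int[eta x]_z `|(u (pi (F z)))%:E|).
  apply/integrableP; split.
    by apply: meta_int.
  under eq_integral do rewrite gee0_abs ?integral_ge0//.
  rewrite -nu_int //.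
  rewrite (@inv_ge0 F (fun z => `|(u (pi z))%:E|)) //.
  rewrite (nu_pi_ge0 (fun x => `|(u x)%:E|)) //.
  by move/integrableP: iu1 => [].
apply: filterS (integrable_ae measurableT iphi) => x /(_ I) fx _.
have ih : (eta x).-integrable setT (fun z => (u (pi (F z)))%:E).
  apply/integrableP; split; first exact/measurable_EFinP.
  by move: fx => /fin_numPlt /andP[].
have mH : measurable_fun setT (fun z => (u (pi (F z)) * v (pi z))%:E).
  by apply/measurable_EFinP; exact: measurable_funM.
rewrite P_E// -[in RHS](@int_fib x _ mH).
rewrite [in RHS](eq_integral (fun z => (u (pi (F z)))%:E * (v x)%:E)); last first.
  by move=> z; rewrite inE /fib /= => ->; rewrite EFinM.
rewrite [in RHS]integralZr; last exact: (integrableS measurableT (mfib x) (@subsetT _ _) ih).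
rewrite [in RHS]int_fib; last exact/measurable_EFinP.
rewrite EFinM fineK//; first exact: integrable_fin_num.
exact: mfib.
Qed.

Lemma Sym (T Tinv Jt Jtinv St Stinv : M -> M) (J S : X -> X) :
  measurable_iso T Tinv -> preserves mu eta T ->
  measurable_iso Jt Jtinv -> preserves mu eta Jt ->
  (forall xi, T (Jt xi) = Jt (Tinv xi)) -> induced_map pi Jt J ->
  measurable_iso St Stinv -> (forall xi, T (St xi) = St (T xi)) ->
  preserves mu eta St -> induced_map pi St S -> S = J ->
  forall f g : X -> R, measurable_fun setT f -> measurable_fun setT g ->
  \int[nu]_z (f (pi (T z)) * g (pi z))%:E = \int[nu]_z (f (pi z) * g (pi (T z)))%:E.
Proof.
move=> [mT _ TK _] pT [mJ _ _ _] pJ TJ iJ [mS _ _ _] TS pS iS SJ f g mf mg.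
have mHf : measurable_fun setT (fun z => (f (pi (T z)) * g (pi z))%:E).
  apply/measurable_EFinP; apply: measurable_funM.
    exact: measurableT_comp mf (measurableT_comp mpi mT).
  exact: measurableT_comp mg mpi.
have mG : measurable_fun setT (fun z => (f (pi z) * g (pi (T z)))%:E).
  apply/measurable_EFinP; apply: measurable_funM.
    exact: measurableT_comp mf mpi.
  exact: measurableT_comp mg (measurableT_comp mpi mT).
rewrite -(@inv Jt _ (conj mJ pJ) mHf).
pose K z := (f (J (pi (Tinv z))) * g (J (pi z)))%:E.
have HK z : (f (pi (T (Jt z))) * g (pi (Jt z)))%:E = K z.
  by rewrite /K TJ -!iJ.
have mK : measurable_fun setT K.
  apply: (eq_measurable_fun (fun z => (f (pi (T (Jt z))) * g (pi (Jt z)))%:E)).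
    by move=> z _; rewrite HK.
  exact: measurableT_comp mHf mJ.
rewrite (eq_integral K); last by move=> z _; rewrite HK.
rewrite -(@inv T _ (conj mT pT) mK).
rewrite -(@inv St _ (conj mS pS) mG).
apply: eq_integral => z _.
by rewrite /K TK TS -!iS SJ.
Qed.

Lemma main_sec (T Tinv Jt Jtinv St Stinv : M -> M) (J S : X -> X) :
  measurable_iso T Tinv -> preserves mu eta T ->
  measurable_iso Jt Jtinv -> fiber_preserving pi Jt -> preserves mu eta Jt ->
  (forall xi, T (Jt xi) = Jt (Tinv xi)) -> induced_map pi Jt J ->
  measurable_iso St Stinv -> (forall xi, T (St xi) = St (T xi)) ->
  fiber_preserving pi St -> preserves mu eta St -> induced_map pi St S ->
  S = J ->
  (forall f g : X -> R, sq_integrable mu f -> sq_integrable mu g ->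
     sq_integrable mu (markov_op pi eta T f) /\
     (\int[mu]_x (markov_op pi eta T f x * g x)%:E)%E =
     (\int[mu]_x (f x * markov_op pi eta T g x)%:E)%E) /\
  (forall f : X -> R, sq_integrable mu f ->
     {ae mu, forall x, markov_op pi eta Tinv f x = markov_op pi eta T f x}).
Proof.
move=> iT pT iJ fJ pJ TJ indJ iS TS fS pS indS SJ.
have Sy := @Sym T Tinv Jt Jtinv St Stinv J S iT pT iJ pJ TJ indJ iS TS pS indS SJ.
case: (iT) => mT mTi TK KT.
have pT' : pres T by [].
have pTi : pres Tinv.
  split => // A mA.
  have mB : measurable (Tinv @^-1` A) by rewrite -[X in measurable X]setTI; exact: mTi.
  rewrite -(pT _ mB); congr compose_measure.
  by apply/seteqP; split => z /=; rewrite TK.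
split.
  move=> f g sf sg; split; first exact: L2.
  rewrite Adj//.
  rewrite (eq_integral (fun x => (markov_op pi eta T g x * f x)%:E)); last first.
    by move=> x _; rewrite mulrC.
  rewrite Adj// Sy; [|exact: sf.1|exact: sg.1].
  by apply: eq_integral => z _; rewrite mulrC.
move=> f sf.
pose a := markov_op pi eta T f; pose b := markov_op pi eta Tinv f.
pose D x := (a x - b x)%R.
have [ma ia] : sq_integrable mu a by exact: L2.
have [mb ib] : sq_integrable mu b by exact: L2.
have sD : sq_integrable mu D.
  by split; [exact: measurable_funB| exact: L2_B].
have h1 := @Adj T f D pT' sf sD.
have h2 := @Adj Tinv f D pTi sf sD.
have mh : measurable_fun setT (fun z => (f (pi (Tinv z)) * D (pi z))%:E).
  apply/measurable_EFinP; apply: measurable_funM.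
    exact: measurableT_comp sf.1 (measurableT_comp mpi mTi).
  exact: measurableT_comp sD.1 mpi.
rewrite -(@inv T _ pT' mh) in h2.
rewrite (eq_integral (fun z => (f (pi z) * D (pi (T z)))%:E)) in h2; last first.
  by move=> z _; rewrite TK.
rewrite -Sy in h2; [|exact: sf.1|exact: sD.1].
rewrite -h1 in h2.
have iaD : mu.-integrable setT (fun x => (a x * D x)%:E) by apply: L2_prod => //; case: sD.
have ibD : mu.-integrable setT (fun x => (b x * D x)%:E) by apply: L2_prod => //; case: sD.
have H0 : \int[mu]_x (D x ^+ 2)%:E = 0.
  rewrite (eq_integral (fun x => (a x * D x)%:E - (b x * D x)%:E)); last first.
    by move=> x _; rewrite -EFinB /D -mulrBl expr2.
  by rewrite integralB_EFin// -/a h2 subee// integrable_fin_num.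
have mD2 : measurable_fun setT (fun x => (D x ^+ 2)%:E).
  by apply/measurable_EFinP; apply: measurable_funX; exact: sD.1.
have : \int[mu]_x `|(D x ^+ 2)%:E| = 0.
  by rewrite -H0; apply: eq_integral => x _; rewrite abse_EFin ger0_norm ?sqr_ge0.
move/(ae_eq_integral_abs _ measurableT mD2) => H.
apply: filterS H => x /(_ I) /= /eqP; rewrite eqe expf_eq0 /= /D subr_eq0 => /eqP.
by [].
Qed.

End Main.

Theorem proposition2p4 (R : realType) (dX dM : measure_display)
  (X : measurableType dX) (M : measurableType dM)
  (hX : forall x : X, measurable [set x])
  (pi : M -> X) (eta : X -> probability M R) (mu : probability X R)
  (T Tinv Jt Jtinv St Stinv : M -> M) (J S : X -> X) :
  measured_fibration pi eta ->
  (* T-invariance *)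
  measurable_iso T Tinv -> preserves mu eta T ->
  (* time reversibility, with time-reversing map Jt inducing J *)
  measurable_iso Jt Jtinv -> fiber_preserving pi Jt -> preserves mu eta Jt ->
  (forall xi, T (Jt xi) = Jt (Tinv xi)) -> induced_map pi Jt J ->
  (* symmetry: an automorphism St inducing S = J *)
  measurable_iso St Stinv -> (forall xi, T (St xi) = St (T xi)) ->
  fiber_preserving pi St -> preserves mu eta St -> induced_map pi St S ->
  S = J ->
  (forall f g : X -> R, sq_integrable mu f -> sq_integrable mu g ->
     sq_integrable mu (markov_op pi eta T f) /\
     (\int[mu]_x (markov_op pi eta T f x * g x)%:E)%E =
     (\int[mu]_x (f x * markov_op pi eta T g x)%:E)%E) /\
  (forall f : X -> R, sq_integrable mu f ->
     {ae mu, forall x, markov_op pi eta Tinv f x = markov_op pi eta T f x}).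
Proof.
move=> hf; exact: (@main_sec R dX dM X M hX pi eta mu hf T Tinv Jt Jtinv St Stinv J S).
Qed.
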